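(* Let $C$ be a complex geodesic with polar point $p$, let $\mathrm G$ be a geodesic not included in $C$, and let $g,g'$ be distinct negative points of $\mathrm G$. If $\mathrm G\cap C\cap \mathrm BV\neq\varnothing$, then $\dfrac{\langle g,p\rangle\langle p,g'\rangle}{\langle g,g'\rangle}\in\mathbb R$. Suppose now that $\dfrac{\langle g,p\rangle\langle p,g'\rangle}{\langle g,g'\rangle}\notin\mathbb R$. Then there exists a unique point of $\mathrm G$ closest to $C$, and the condition $\mathrm{ta}(\mathrm G,C)=\mathrm{ta}(g,C)$ is equivalent to $\mathrm{Re}\dfrac{\langle p,g'\rangle\langle g,g\rangle}{\langle g,g'\rangle\langle p,g\rangle}=1$.
   Context: $V$ is a $3$-dimensional complex vector space with a hermitian form $\langle-,-\rangle$ of signature $++-$; $\mathrm BV=\{x\in\mathbb{CP}V:\langle x,x\rangle<0\}$ is the complex hyperbolic plane, $\mathrm SV$ the set of isotropic points, $\overline{\mathrm B}V=\mathrm BV\cup\mathrm SV$. Points are identified with representative vectors where expressions are projectively invariant. A complex geodesic is $C=\mathbb{CP}p^\perp\cap\overline{\mathrm B}V$ for a positive point $p$ (its polar point). A geodesic is a complete real geodesic in $\overline{\mathrm B}V$ (including its two ideal endpoints). For nonisotropic $x,y$, $\mathrm{ta}(x,y)=\frac{\langle x,y\rangle\langle y,x\rangle}{\langle x,x\rangle\langle y,y\rangle}$; for a negative point $g$, $\mathrm{ta}(g,C):=1-\mathrm{ta}(g,p)$ (equal to $\cosh^2$ of the distance from $g$ to $C$), and $\mathrm{ta}(\mathrm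 G,C):=\inf_{g\in\mathrm G\cap\mathrm BV}\mathrm{ta}(g,C)$. *)

(* Defs.v *)
From mathcomp Require Import all_boot all_algebra.
From mathcomp Require Import classical_sets reals.
From mathcomp.real_closed Require Import complex.
Import GRing.Theory Num.Theory.
Set Implicit Arguments. Unset Strict Implicit. Unset Printing Implicit Defensive.
Local Open Scope ring_scope.
Local Open Scope complex_scope.

Section CH2.
Variable R : realType.
Local Notation C := (R[i]).
Local Notation V := ('rV[C]_3).

(* The hermitian form on V = C^3 given by a matrix H (linear in the first
   argument, antilinear in the second): <x,y> = x H y^*. *)
Definition hf (H : 'M[C]_3) (x y : V) : C := (x *m H *m (map_mx conjc y)^T) 0 0.

(* H is hermitian of signature ++- : H^* = H and H is congruent to
   diag(1,1,-1) (Sylvester). *)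
Definition J3 : 'M[C]_3 := diag_mx (\row_(i < 3) (if i == 2%:R then -1 else 1)).
Definition herm_sig_ppm (H : 'M[C]_3) : Prop :=
  (map_mx conjc H)^T = H /\
  exists2 P : 'M[C]_3, P \in unitmx & P *m H *m (map_mx conjc P)^T = J3.

(* Points of CP(V) are represented by nonzero vectors; two vectors represent
   the same point iff they are proportional. *)
Definition same_point (x y : V) : Prop := exists2 a : C, a != 0 & y = a *: x.

Definition negative (H : 'M[C]_3) (x : V) : Prop := hf H x x < 0.
Definition positive (H : 'M[C]_3) (x : V) : Prop := 0 < hf H x x.
Definition in_closedB (H : 'M[C]_3) (x : V) : Prop := x != 0 /\ hf H x x <= 0.

(* The complex geodesic with polar point p: CP(p^perp) cap closed BV. *)
Definition in_cgeod (H : 'M[C]_3) (p x : V) : Prop :=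
  in_closedB H x /\ hf H x p = 0.

(* Complete real geodesics (with their ideal endpoints): for a real
   2-dimensional subspace W = R u + R w of V on which the form is real-valued
   and which contains a negative vector, the geodesic is
   { [x] in closed BV : x in C.W }.  A predicate G on vectors is a geodesic
   if it is of this form (G is then automatically invariant under nonzero
   complex scaling, i.e. a set of projective points). *)
Definition rspan_pt (u w x : V) : Prop :=
  exists (c : C) (a b : R), c != 0 /\ x = c *: (a%:C *: u + b%:C *: w).

Definition is_geodesic (H : 'M[C]_3) (G : V -> Prop) : Prop :=
  exists u w : V,
    [/\ forall a b : R, a%:C *: u + b%:C *: w = 0 -> a = 0 /\ b = 0,
        hf H u w \is Num.real,
        (exists a b : R, negative H (a%:C *: u + b%:C *: w)) &
        forall x, G x <-> (in_closedB H x /\ rspan_pt u w x)].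

Definition ta (H : 'M[C]_3) (x y : V) : C :=
  hf H x y * hf H y x / (hf H x x * hf H y y).

Definition ta_cg (H : 'M[C]_3) (g p : V) : C := 1 - ta H g p.

Definition ta_geod_cg (H : 'M[C]_3) (G : V -> Prop) (p : V) : R :=
  inf [set complex.Re (ta_cg H g p) | g in [set g | G g /\ negative H g]].

(* x is a point of G closest to C: it minimizes the distance to C, i.e.
   ta(., C) = cosh^2(dist(., C)), among the points of G in BV. *)
Definition closest_to_cg (H : 'M[C]_3) (G : V -> Prop) (p x : V) : Prop :=
  [/\ G x, negative H x &
      forall y, G y -> negative H y -> ta_cg H x p <= ta_cg H y p].

End CH2.

(* Main.v *)
Require Import Defs.
From mathcomp Require Import all_boot all_order all_algebra.
From mathcomp Require Import classical_sets reals.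
From mathcomp.real_closed Require Import complex.
From mathcomp Require Import ring lra.
Import Order.TTheory GRing.Theory Num.Theory.
Local Open Scope ring_scope.
Local Open Scope complex_scope.
Section T.
Variable R : realType.
Local Notation C := (R[i]).
Local Notation V := ('rV[C]_3).
Implicit Types (H : 'M[C]_3) (x y z : V).
Definition o0 : 'I_3 := Ordinal (isT : (0 < 3)%N).
Definition o1 : 'I_3 := Ordinal (isT : (1 < 3)%N).
Definition o2 : 'I_3 := Ordinal (isT : (2 < 3)%N).
Definition r0 : 'I_1 := Ordinal (isT : (0 < 1)%N).

Lemma hf_sum H x y : hf H x y =
  \sum_(j < 3) (\sum_(i < 3) x r0 i * H i j) * (conjc (y r0 j)).
Proof. have -> : r0 = 0 by apply/val_inj.
by rewrite /hf mxE; apply: eq_bigr => j _; rewrite !mxE. Qed.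

Lemma hf3 H x y : hf H x y =
  (x r0 o0 * H o0 o0 + x r0 o1 * H o1 o0 + x r0 o2 * H o2 o0) * (conjc (y r0 o0)) +
  (x r0 o0 * H o0 o1 + x r0 o1 * H o1 o1 + x r0 o2 * H o2 o1) * (conjc (y r0 o1)) +
  (x r0 o0 * H o0 o2 + x r0 o1 * H o1 o2 + x r0 o2 * H o2 o2) * (conjc (y r0 o2)).
Proof.
have E0 : ord0 = o0 by apply/val_inj.
have E1 : lift ord0 ord0 = o1 :> 'I_3 by apply/val_inj.
have E2 : lift ord0 (lift ord0 ord0) = o2 :> 'I_3 by apply/val_inj.
rewrite hf_sum !big_ord_recl !big_ord0 !addr0 /= !addrA E2 E1 E0. done.
Qed.

Lemma J3E (i j : 'I_3) : J3 R i j = if i == j then (if i == o2 then -1 else 1) else 0.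
Proof. rewrite /J3 !mxE; case: (i == j); rewrite ?mulr1n ?mulr0n //.
Qed.

Lemma hfJ x y : hf (J3 R) x y = x r0 o0 * (conjc (y r0 o0)) + x r0 o1 * (conjc (y r0 o1)) - x r0 o2 * (conjc (y r0 o2)).
Proof. rewrite hf3 !J3E /=. ring. Qed.

Lemma conjD (a b : C) : (conjc (a + b)) = (conjc a) + (conjc b). Proof. exact: rmorphD. Qed.
Lemma conjM (a b : C) : (conjc (a * b)) = (conjc a) * (conjc b). Proof. exact: rmorphM. Qed.
Lemma conjN (a : C) : (conjc (- a)) = - (conjc a). Proof. exact: rmorphN. Qed.
Lemma conjB (a b : C) : (conjc (a - b)) = (conjc a) - (conjc b). Proof. exact: rmorphB. Qed.

Lemma hfDl H x y z : hf H (x + y) z = hf H x z + hf H y z.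
Proof. rewrite !hf3 !mxE. ring. Qed.
Lemma hfZl H a x z : hf H (a *: x) z = a * hf H x z.
Proof. rewrite !hf3 !mxE. ring. Qed.
Lemma hfDr H x y z : hf H z (x + y) = hf H z x + hf H z y.
Proof. rewrite !hf3 !mxE !rmorphD. ring. Qed.
Lemma hfZr H a x z : hf H z (a *: x) = (conjc a) * hf H z x.
Proof. rewrite !hf3 !mxE !rmorphM. ring. Qed.
Lemma hfNl H x z : hf H (- x) z = - hf H x z.
Proof. rewrite !hf3 !mxE. ring. Qed.
Lemma hfNr H x z : hf H z (- x) = - hf H z x.
Proof. rewrite !hf3 !mxE !rmorphN. ring. Qed.
Lemma hf0l H z : hf H 0 z = 0.
Proof. rewrite !hf3 !mxE. ring. Qed.

Lemma hf_herm H x y : (map_mx conjc H)^T = H -> hf H y x = (conjc (hf H x y)).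
Proof.
move=> hH.
have cH : forall i j, (conjc (H i j)) = H j i.
  by move=> i j; rewrite -[in RHS]hH !mxE.
rewrite !hf3 !(rmorphD, rmorphM) /= !cH !conjcK. ring. Qed.

Lemma hf_coord H P x y : P \in unitmx -> P *m H *m (map_mx conjc P)^T = J3 R ->
  hf H x y = hf (J3 R) (x *m invmx P) (y *m invmx P).
Proof.
move=> Pu hP.
have HE : H = invmx P *m J3 R *m (map_mx conjc (invmx P))^T.
  rewrite -hP !mulmxA mulVmx // mul1mx -mulmxA -trmx_mul -map_mxM mulVmx //.
  by rewrite map_mx1 trmx1 mulmx1.
rewrite /hf {1}HE map_mxM trmx_mul !mulmxA. done.
Qed.

Definition nsq (a : C) : R := complex.Re a ^+ 2 + complex.Im a ^+ 2.

Lemma mulcc (a : C) : a * (conjc a) = (nsq a)%:C.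
Proof. case: a => a1 a2; rewrite /nsq /=. simpc. rewrite -complexr0. congr (_ +i* _); ring. Qed.

Lemma nsq_ge0 (a : C) : 0 <= nsq a.
Proof. rewrite /nsq; nra. Qed.

Lemma nsq_eq0 (a : C) : nsq a = 0 -> a = 0.
Proof. case: a => a1 a2; rewrite /nsq /= => h.
have h1 : a1 = 0 by nra. have h2 : a2 = 0 by nra. by rewrite h1 h2. Qed.

Lemma ltc0 (c : C) : (c < 0) <-> (c = (complex.Re c)%:C /\ complex.Re c < 0).
Proof. case: c => a b /=; rewrite ltcE /=; split.
  by case/andP=> /eqP <- ->.
by case=> [[->]] ->; rewrite eqxx. Qed.

Section Sig.
Variables (H P : 'M[C]_3).
Hypotheses (hH : (map_mx conjc H)^T = H) (Pu : P \in unitmx)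
  (hP : P *m H *m (map_mx conjc P)^T = J3 R).

Local Notation co z := (z *m invmx P).

Lemma hf_self z : hf H z z =
  (nsq (co z r0 o0) + nsq (co z r0 o1) - nsq (co z r0 o2))%:C.
Proof. by rewrite (@hf_coord H P z z Pu hP) hfJ !mulcc -!rmorphD -rmorphB. Qed.

Lemma co_eq0 z : co z r0 o0 = 0 -> co z r0 o1 = 0 -> co z r0 o2 = 0 -> z = 0.
Proof.
move=> h0 h1 h2.
have hc : co z = 0.
  apply/rowP => j; rewrite [RHS]mxE.
  have -> : (0 : 'I_1) = r0 by apply/val_inj.
  case: j => [[|[|[|//]]]] Hj.
  - by have -> : Ordinal Hj = o0 by apply/val_inj.
  - by have -> : Ordinal Hj = o1 by apply/val_inj.
  - by have -> : Ordinal Hj = o2 by apply/val_inj.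
by rewrite -(mulmxKV Pu z) hc mul0mx.
Qed.


Lemma entryBZ (A B : 'rV[C]_3) k i j : (A - k *: B) i j = A i j - k * B i j.
Proof. by rewrite !mxE. Qed.

Lemma nsq0 : nsq 0 = 0. Proof. by rewrite /nsq /= expr0n /= addr0. Qed.

Lemma hf_hermE x y : hf H y x = (conjc (hf H x y)).
Proof. exact: hf_herm. Qed.

Lemma rcs x y : hf H y y < 0 -> exists r : R,
  [/\ 0 <= r, hf H x y * hf H y x - hf H x x * hf H y y = r%:C &
      (r = 0 -> exists k, x = k *: y)].
Proof.
move=> /ltc0 [Yr Yneg]; set Yv := complex.Re (hf H y y) in Yr Yneg.
have y2 : co y r0 o2 != 0.
  apply/eqP => h; move: Yneg; rewrite /Yv hf_self h nsq0 subr0 /=.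
  have := nsq_ge0 (co y r0 o0); have := nsq_ge0 (co y r0 o1). lra.
set k := co x r0 o2 / co y r0 o2.
set z := x - k *: y.
have z2 : co z r0 o2 = 0.
  by rewrite /z mulmxBl -scalemxAl entryBZ /k divfK // subrr.
have hz : hf H z z = (nsq (co z r0 o0) + nsq (co z r0 o1))%:C.
  by rewrite hf_self z2 nsq0 subr0.
have hz' : hf H z z = hf H x x - (conjc k) * hf H x y - k * hf H y x + k * (conjc k) * hf H y y.
  rewrite /z !(hfDl, hfNl, hfZl, hfDr, hfNr, hfZr). ring.
have hzy : hf H z y = hf H x y - k * hf H y y.
  rewrite /z !(hfDl, hfNl, hfZl). ring.
set n := nsq (co z r0 o0) + nsq (co z r0 o1).
set m := nsq (hf H z y).
have n0 : 0 <= n by rewrite /n; have := nsq_ge0 (co z r0 o0); have := nsq_ge0 (co z r0 o1); lra.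
have m0 : 0 <= m by exact: nsq_ge0.
have zE : z = x - k *: y by [].
clearbody z k.
exists (m - n * Yv); split.
- nra.
- rewrite rmorphB rmorphM /= /m -mulcc -hz -Yr hzy hz' (hf_hermE x y).
  have Ys : (conjc (hf H y y)) = hf H y y by rewrite Yr conjc_real.
  rewrite !rmorphB !rmorphM /= Ys. ring.
- move=> h0.
  have hn : n = 0 by nra.
  have e0 : nsq (co z r0 o0) = 0.
    by move: hn; rewrite /n; have := nsq_ge0 (co z r0 o0); have := nsq_ge0 (co z r0 o1); lra.
  have e1 : nsq (co z r0 o1) = 0.
    by move: hn; rewrite /n; have := nsq_ge0 (co z r0 o0); have := nsq_ge0 (co z r0 o1); lra.
  have z0 : z = 0 by apply: co_eq0 => //; apply: nsq_eq0.
  by exists k; apply/eqP; rewrite -subr_eq0 -zE z0.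
Qed.
End Sig.

Lemma core1 (s t A B C : R) : 0 < s -> 0 < t -> 0 < A -> B^+2 < A*C ->
  exists r, 0 < s - t*r^+2 /\ forall x y : R, 0 < s*x^+2 - t*y^+2 ->
    (A + 2*B*r + C*r^+2) * (s*x^+2 - t*y^+2) <= (A*x^+2 + 2*B*x*y + C*y^+2) * (s - t*r^+2) /\
    ((A + 2*B*r + C*r^+2) * (s*x^+2 - t*y^+2) = (A*x^+2 + 2*B*x*y + C*y^+2) * (s - t*r^+2) -> y = r*x).
Proof.
move=> s0 t0 A0 BAC.
have C0 : 0 < C by nra.
set K := C*s + A*t.
have K0 : 0 < K by rewrite /K; nra.
have Dp : 0 < K^+2 - 4*B^+2*s*t.
  have -> : K^+2 - 4*B^+2*s*t = (C*s - A*t)^+2 + 4*s*t*(A*C - B^+2) by rewrite /K; ring.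
  have : 0 < s*t*(A*C - B^+2) by apply: mulr_gt0; [apply: mulr_gt0 | lra].
  have : 0 <= (C*s - A*t)^+2 by exact: sqr_ge0.
  lra.
set S := Num.sqrt (K^+2 - 4*B^+2*s*t).
have S0 : 0 <= S by exact: sqrtr_ge0.
have SS : S^+2 = K^+2 - 4*B^+2*s*t by rewrite sqr_sqrtr // ltW.
have KS : K + S != 0 by apply/eqP; lra.
set r := -2*B*s/(K+S).
have qr : B*t*r^+2 + K*r + B*s = 0.
  have : (B*t*r^+2 + K*r + B*s) * (K+S)^+2 = B*s*(S^+2 - K^+2 + 4*B^+2*s*t).
    by rewrite /r; field.
  rewrite SS. have -> : B * s * (K ^+ 2 - 4 * B ^+ 2 * s * t - K ^+ 2 + 4 * B ^+ 2 * s * t) = 0 by ring.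
  move/eqP; rewrite mulf_eq0 => /orP [/eqP //|]; rewrite expf_eq0 /= (negbTE KS) //.
have Ds : 0 < s - t*r^+2.
  have e : (s - t*r^+2) * (K+S)^+2 = s*((K+S)^+2 - 4*t*B^+2*s) by rewrite /r; field.
  have h0 : 0 < (K+S)^+2 - 4*t*B^+2*s.
    have : 0 <= S * (2*K + S) by apply: mulr_ge0; lra.
    have -> : (K+S)^+2 - 4*t*B^+2*s = (K^+2 - 4*B^+2*s*t) + S * (2*K + S) by ring.
    lra.
  have h1 : 0 < s*((K+S)^+2 - 4*t*B^+2*s) by apply: mulr_gt0.
  have h2 : 0 < (K+S)^+2 by nra.
  rewrite -e in h1. by rewrite (pmulr_lgt0 _ h2) in h1.
exists r; split => // x y Dxy.
set Ns := A + 2*B*r + C*r^+2.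
have Ns0 : 0 < Ns.
  have e : A * Ns = (A + B*r)^+2 + (A*C - B^+2)*r^+2 by rewrite /Ns; ring.
  have : 0 < A * Ns.
    rewrite e; have [->|rn] := eqVneq r 0.
      rewrite mulr0 addr0 expr0n /= mulr0 addr0. exact: exprn_gt0.
    have : 0 < (A*C - B^+2)*r^+2 by apply: mulr_gt0; [lra | rewrite exprn_even_gt0].
    have : 0 <= (A + B*r)^+2 by exact: sqr_ge0.
    lra.
  by rewrite (pmulr_rgt0 _ A0).
set kap := (s - t*r^+2)*C + Ns*t.
have kap0 : 0 < kap by rewrite /kap; nra.
have M : (A*x^+2 + 2*B*x*y + C*y^+2) * (s - t*r^+2) - Ns * (s*x^+2 - t*y^+2)
   = kap * (y - r*x)^+2 + 2*(B*t*r^+2 + K*r + B*s)*x*(y - r*x).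
  rewrite /kap /Ns /K; ring.
rewrite qr mulr0 !mul0r addr0 in M.
split.
- have : 0 <= kap * (y - r*x)^+2 by apply: mulr_ge0; [lra | exact: sqr_ge0]. lra.
- move=> E. have : kap * (y - r*x)^+2 = 0 by lra.
  move/eqP; rewrite mulf_eq0 (gt_eqF kap0) /= expf_eq0 /= subr_eq0 => /eqP //.
Qed.

Lemma core2 (s t A B C : R) : 0 < s -> 0 < t -> 0 < A -> B^+2 < A*C ->
  (forall x y : R, 0 < s*x^+2 - t*y^+2 ->
     A * (s*x^+2 - t*y^+2) <= (A*x^+2 + 2*B*x*y + C*y^+2) * s) <-> B = 0.
Proof.
move=> s0 t0 A0 BAC.
have C0 : 0 < C by nra.
set K := C*s + A*t.
have K0 : 0 < K by rewrite /K; nra.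
split; last first.
  move=> -> x y _. have : 0 <= (C*s + A*t)*y^+2 by apply: mulr_ge0; [exact: ltW K0 | exact: sqr_ge0].
  have e : (A*x^+2 + 2*0*x*y + C*y^+2)*s - A*(s*x^+2 - t*y^+2) = (C*s + A*t)*y^+2 by ring.
  lra.
move=> h; apply/eqP; apply/negPn/negP => Bn.
set e := - B * s / K.
have eK : e * K = - B * s by rewrite /e; field; apply/eqP; lra.
have D1 : 0 < s * 1^+2 - t * e^+2.
  have e2 : e^+2 * K^+2 = B^+2 * s^+2 by rewrite -exprMn eK; ring.
  have e3 : (s - t * e^+2) * K^+2 = s * (K^+2 - t*B^+2*s).
    have -> : (s - t * e^+2) * K^+2 = s * K^+2 - t * (e^+2 * K^+2) by ring.
    rewrite e2; ring.
  have Dp : 0 < K^+2 - 4*B^+2*s*t.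
    have -> : K^+2 - 4*B^+2*s*t = (C*s - A*t)^+2 + 4*s*t*(A*C - B^+2) by rewrite /K; ring.
    have : 0 < s*t*(A*C - B^+2) by apply: mulr_gt0; [apply: mulr_gt0 | lra].
    have : 0 <= (C*s - A*t)^+2 by exact: sqr_ge0.
    lra.
  have hB : 0 <= B^+2*s*t by apply: mulr_ge0; [apply: mulr_ge0; [exact: sqr_ge0|lra]|lra].
  have h3 : 0 < s * (K^+2 - t*B^+2*s).
    apply: mulr_gt0 => //. have -> : t*B^+2*s = B^+2*s*t by ring. lra.
  rewrite -e3 in h3. rewrite expr1n mulr1.
  by rewrite (pmulr_lgt0 _ (exprn_gt0 2 K0)) in h3.
have := h 1 e D1.
have B2 : 0 < B^+2 by rewrite exprn_even_gt0.
have e4 : (A*1^+2 + 2*B*1*e + C*e^+2)*s - A*(s*1^+2 - t*e^+2) = e*B*s.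
  have -> : (A*1^+2 + 2*B*1*e + C*e^+2)*s - A*(s*1^+2 - t*e^+2) = e*(2*B*s) + e*(e*K) by rewrite /K; ring.
  rewrite eK; ring.
have e5 : (e*B*s) * K = - (B^+2 * s^+2) by rewrite -[LHS]/(e*B*s*K) (_ : e*B*s*K = (e*K)*B*s); [rewrite eK; ring|ring].
have : (e*B*s) * K < 0 by rewrite e5 oppr_lt0; apply: mulr_gt0 => //; exact: exprn_gt0.
rewrite (pmulr_llt0 _ K0) => h6.
lra.
Qed.

Lemma cmpF (N1 D1 N2 D2 q : R) : 0 < D1 -> 0 < D2 -> 0 < q ->
  (1 - N1/((-D1)*q) <= 1 - N2/((-D2)*q)) = (N1*D2 <= N2*D1).
Proof.
move=> d1 d2 q0.
have e : (1 - N2/((-D2)*q)) - (1 - N1/((-D1)*q)) = (N2*D1 - N1*D2) / (D1*D2*q).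
  field; apply/and3P; split; apply/eqP; lra.
have den : 0 < D1*D2*q by apply: mulr_gt0 => //; apply: mulr_gt0.
apply/idP/idP => h.
- have : 0 <= (N2*D1 - N1*D2) / (D1*D2*q) by rewrite -e; lra.
  rewrite pmulr_lge0 ?invr_gt0 //. lra.
- have : 0 <= (N2*D1 - N1*D2) / (D1*D2*q) by apply: divr_ge0; [lra | exact: ltW].
  rewrite -e. lra.
Qed.

Lemma eqF (N1 D1 N2 D2 q : R) : 0 < D1 -> 0 < D2 -> 0 < q ->
  (1 - N1/((-D1)*q) = 1 - N2/((-D2)*q)) -> N1*D2 = N2*D1.
Proof.
move=> d1 d2 q0 h.
have e : (1 - N2/((-D2)*q)) - (1 - N1/((-D1)*q)) = (N2*D1 - N1*D2) / (D1*D2*q).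
  field; apply/and3P; split; apply/eqP; lra.
have den : 0 < D1*D2*q by apply: mulr_gt0 => //; apply: mulr_gt0.
move: e; rewrite h subrr => /esym/eqP; rewrite mulf_eq0 invr_eq0 (gt_eqF den) orbF subr_eq0.
by move/eqP ->.
Qed.



Section Alg.
Variables (qa qb qc ku kw mu mw : R).
Definition QbR (a b c d : R) := a*c*qa + (a*d+b*c)*qb + b*d*qc.
Definition QfR (a b : R) := QbR a b a b.
Definition L1R (a b : R) := a*ku + b*kw.
Definition L2R (a b : R) := a*mu + b*mw.
Definition NfR (a b : R) := L1R a b ^+2 + L2R a b ^+2.
Definition FrR (pp a b : R) := 1 - NfR a b / (QfR a b * pp).

Variables (a0 b0 a1 b1 : R).
Hypotheses (q00n : QfR a0 b0 < 0)
  (rpos : 0 < QbR a0 b0 a1 b1 ^+2 - QfR a1 b1 * QfR a0 b0).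
Definition ahR := QfR a0 b0 * a1 - QbR a0 b0 a1 b1 * a0.
Definition bhR := QfR a0 b0 * b1 - QbR a0 b0 a1 b1 * b0.
Definition sR := - QfR a0 b0.
Definition tR := QfR ahR bhR.
Definition dhR := a0*bhR - ahR*b0.
Definition xcR (a b : R) := (a*bhR - b*ahR)/dhR.
Definition ycR (a b : R) := (a0*b - b0*a)/dhR.
Definition AR := NfR a0 b0.
Definition CR := NfR ahR bhR.
Definition BR := L1R a0 b0 * L1R ahR bhR + L2R a0 b0 * L2R ahR bhR.
Definition ER := L2R a0 b0 * L1R ahR bhR - L1R a0 b0 * L2R ahR bhR.

Lemma sR_gt0 : 0 < sR. Proof. by rewrite /sR oppr_gt0. Qed.
Lemma tR_gt0 : 0 < tR.
Proof.
have -> : tR = QfR a0 b0 * (QfR a0 b0 * QfR a1 b1 - QbR a0 b0 a1 b1 ^+2).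
  by rewrite /tR /ahR /bhR /QfR /QbR; ring.
rewrite nmulr_rgt0 //; move: rpos; rewrite [QfR a1 b1 * _]mulrC; lra.
Qed.
Lemma dhR_neq0 : dhR != 0.
Proof.
have e1 : dhR = QfR a0 b0 * (a0*b1 - a1*b0) by rewrite /dhR /ahR /bhR; ring.
have e2 : QbR a0 b0 a1 b1 ^+2 - QfR a1 b1 * QfR a0 b0 = (qb^+2 - qa*qc)*(a0*b1 - a1*b0)^+2.
  by rewrite /QfR /QbR; ring.
rewrite e1 mulf_neq0 //; first by apply/eqP => h; move: q00n; rewrite h ltxx.
apply/eqP => h; move: rpos; rewrite e2 h expr0n /= mulr0 ltxx. done.
Qed.
Lemma coord1 a b : a = xcR a b * a0 + ycR a b * ahR.
Proof. have := dhR_neq0; rewrite /xcR /ycR /dhR => hd; field. done. Qed.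
Lemma coord2 a b : b = xcR a b * b0 + ycR a b * bhR.
Proof. have := dhR_neq0; rewrite /xcR /ycR /dhR => hd; field. done. Qed.
Lemma QfE (x y : R) : QfR (x*a0 + y*ahR) (x*b0 + y*bhR) = - (sR*x^+2 - tR*y^+2).
Proof. rewrite /sR /tR /ahR /bhR /QfR /QbR; ring. Qed.
Lemma L1E (x y : R) : L1R (x*a0 + y*ahR) (x*b0 + y*bhR) = x * L1R a0 b0 + y * L1R ahR bhR.
Proof. rewrite /L1R; ring. Qed.
Lemma L2E (x y : R) : L2R (x*a0 + y*ahR) (x*b0 + y*bhR) = x * L2R a0 b0 + y * L2R ahR bhR.
Proof. rewrite /L2R; ring. Qed.
Lemma NfE (x y : R) : NfR (x*a0 + y*ahR) (x*b0 + y*bhR) = AR*x^+2 + 2*BR*x*y + CR*y^+2.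
Proof. rewrite /NfR L1E L2E /AR /BR /CR /NfR; ring. Qed.
Lemma ACB : AR*CR - BR^+2 = ER^+2.
Proof. rewrite /AR /BR /CR /ER /NfR; ring. Qed.
Lemma EEq : QfR a0 b0 * (L2R a0 b0 * L1R a1 b1 - L1R a0 b0 * L2R a1 b1) = ER.
Proof. rewrite /ER /ahR /bhR /L1R /L2R; ring. Qed.
Lemma BBq : QfR a0 b0 * (L1R a0 b0 * L1R a1 b1 + L2R a0 b0 * L2R a1 b1) =
  BR + QbR a0 b0 a1 b1 * AR.
Proof. rewrite /BR /AR /NfR /ahR /bhR /L1R /L2R; ring. Qed.
Lemma FrE (pp x y : R) : FrR pp (x*a0 + y*ahR) (x*b0 + y*bhR) =
  1 - (AR*x^+2 + 2*BR*x*y + CR*y^+2) / ((- (sR*x^+2 - tR*y^+2)) * pp).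
Proof. by rewrite /FrR QfE NfE. Qed.
End Alg.

Section Geo.
Variables (H P : 'M[C]_3) (u w p : V).
Hypotheses (hH : (map_mx conjc H)^T = H) (huw : hf H u w \is Num.real).

Definition wv (a b : R) : V := a%:C *: u + b%:C *: w.
Definition quu := complex.Re (hf H u u).
Definition quw := complex.Re (hf H u w).
Definition qww := complex.Re (hf H w w).
Definition ku := complex.Re (hf H u p).
Definition kw := complex.Re (hf H w p).
Definition mu := complex.Im (hf H u p).
Definition mw := complex.Im (hf H w p).
Definition pp := complex.Re (hf H p p).
Local Notation Qb := (QbR quu quw qww).
Local Notation Qf := (QfR quu quw qww).
Local Notation L1 := (L1R ku kw).
Local Notation L2 := (L2R mu mw).
Local Notation Nf := (NfR ku kw mu mw).
Local Notation Fr := (FrR quu quw qww ku kw mu mw pp).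

Lemma ReMr (z : C) (k : R) : complex.Re (z * k%:C) = complex.Re z * k.
Proof. case: z => a b; rewrite -complexr0; simpc. by []. Qed.

Lemma cplxE (z : C) : z = complex.Re z +i* complex.Im z.
Proof. by case: z. Qed.

Lemma hf_self_real x : hf H x x = (complex.Re (hf H x x))%:C.
Proof.
have := @hf_herm H x x hH. case: (hf H x x) => a b /= [] h.
have -> : b = 0 by lra. done.
Qed.

Lemma hf_wv a b c d : hf H (wv a b) (wv c d) = (Qb a b c d)%:C.
Proof.
rewrite /wv !(hfDl, hfZl, hfDr, hfZr) !conjc_real.
rewrite (@hf_herm H u w hH) (hf_self_real u) (hf_self_real w) -(RRe_real huw) conjc_real.
rewrite /QbR !rmorphD !rmorphM /= -/quu -/quw -/qww. ring.
Qed.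

Lemma hfp_wv a b : hf H (wv a b) p = L1 a b +i* L2 a b.
Proof.
rewrite /wv hfDl !hfZl (cplxE (hf H u p)) (cplxE (hf H w p)) /L1R /L2R /ku /kw /mu /mw /=.
rewrite -!complexr0. simpc. congr (_ +i* _); ring.
Qed.

Lemma hf_sc c c' x y : hf H (c *: x) (c' *: y) = c * conjc c' * hf H x y.
Proof. rewrite hfZl hfZr; ring. Qed.

Lemma nsq_gt0 (c : C) : c != 0 -> 0 < nsq c.
Proof. move=> cn; have := nsq_ge0 c; rewrite le_eqVlt => /orP [/eqP h|//].
by move: cn; rewrite (@nsq_eq0 c (esym h)) eqxx. Qed.

Lemma hf_scwv c a b : hf H (c *: wv a b) (c *: wv a b) = (nsq c * Qf a b)%:C.
Proof. by rewrite hf_sc hf_wv mulcc rmorphM. Qed.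

Lemma neg_wv c a b : c != 0 -> negative H (c *: wv a b) <-> Qf a b < 0.
Proof.
move=> cn; rewrite /negative hf_scwv ltcR (pmulr_rlt0 _ (nsq_gt0 _ cn)). done.
Qed.

Hypothesis pp0 : 0 < hf H p p.
Lemma pp_gt0 : 0 < pp.
Proof. by move: pp0; rewrite (hf_self_real p) ltcR. Qed.

Lemma ta_wv c a b : c != 0 -> Qf a b != 0 -> ta_cg H (c *: wv a b) p = (Fr a b)%:C.
Proof.
move=> cn qn.
have ppn : pp != 0 by apply/eqP => h; have := pp_gt0; rewrite h ltxx.
rewrite /ta_cg /ta hf_scwv (@hf_herm H (c *: wv a b) p hH) hfZl hfp_wv.
rewrite (hf_self_real p) -/pp.
have -> : c * (L1 a b +i* L2 a b) * conjc (c * (L1 a b +i* L2 a b)) = (nsq c * Nf a b)%:C.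
  rewrite rmorphM /= mulrACA mulcc mulcc -rmorphM. by congr (_ %:C).
rewrite -rmorphM -fmorph_div -(rmorph1 (real_complex R)) -rmorphB. congr (_ %:C).
rewrite /FrR. field. apply/and3P; split => //; last by rewrite (gt_eqF (nsq_gt0 _ cn)).
Qed.

Hypotheses (Pu : P \in unitmx) (hP : P *m H *m (map_mx conjc P)^T = J3 R).
Variables (G : V -> Prop) (g g' : V).
Hypotheses (Gc : forall x, G x <-> in_closedB H x /\ rspan_pt u w x)
  (Gg : G g) (Gg' : G g') (ng : negative H g) (ng' : negative H g')
  (nsame : ~ same_point g g').

Lemma Gneg x : G x -> negative H x ->
  exists c a b, [/\ c != 0, x = c *: wv a b & Qf a b < 0].
Proof.
move=> /Gc [_ [c [a [b [cn xE]]]]] nx; exists c, a, b; split => //.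
by rewrite -(neg_wv c a b cn) -xE.
Qed.

Lemma Gin c a b : c != 0 -> Qf a b < 0 -> G (c *: wv a b) /\ negative H (c *: wv a b).
Proof.
move=> cn q; have nx : negative H (c *: wv a b) by rewrite neg_wv.
split => //; apply/Gc; split; last by exists c, a, b.
split; last by apply: ltW.
by apply/eqP => h0; move: nx; rewrite /negative h0 hf0l ltxx.
Qed.

Lemma Fr_ge1 a b : Qf a b < 0 -> 1 <= Fr a b.
Proof.
move=> q; rewrite /FrR.
have n0 : 0 <= Nf a b by rewrite /NfR; apply: addr_ge0; exact: sqr_ge0.
have : Qf a b * pp < 0 by rewrite pmulr_llt0 // pp_gt0.
move=> qp.
have : Nf a b / (Qf a b * pp) <= 0 by apply: mulr_ge0_le0 => //; rewrite invr_le0 ltW.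
lra.
Qed.


Variables (c0 c1 : C) (a0 b0 a1 b1 : R).
Hypotheses (c0n : c0 != 0) (c1n : c1 != 0) (gE : g = c0 *: wv a0 b0)
  (g'E : g' = c1 *: wv a1 b1) (q00n : Qf a0 b0 < 0) (q11n : Qf a1 b1 < 0).

Lemma rpos_lem : 0 < Qb a0 b0 a1 b1 ^+2 - Qf a1 b1 * Qf a0 b0.
Proof.
have hneg0 : hf H (wv a0 b0) (wv a0 b0) < 0 by rewrite hf_wv ltcR.
have [r [r0 rE rk]] := @rcs H P hH Pu hP (wv a1 b1) (wv a0 b0) hneg0.
rewrite !hf_wv -!rmorphM -rmorphB in rE; move/complexI: rE => rE.
have -> : Qb a0 b0 a1 b1 ^+2 - Qf a1 b1 * Qf a0 b0 = r by rewrite -rE /QfR /QbR; ring.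
rewrite lt_def r0 andbT; apply/eqP => r00; have [k kE] := rk r00.
have kn : k != 0.
  apply/eqP => k0; move: q11n.
  have := hf_wv a1 b1 a1 b1; rewrite kE k0 scale0r hf0l => /esym/complexI.
  by rewrite /QfR => ->; rewrite ltxx.
apply: nsame; exists (c1 * k / c0); first by rewrite !mulf_neq0 ?invr_eq0.
by rewrite g'E kE gE !scalerA; congr (_ *: _); field.
Qed.

Local Notation ah := (ahR quu quw qww a0 b0 a1 b1).
Local Notation bh := (bhR quu quw qww a0 b0 a1 b1).
Local Notation sG := (sR quu quw qww a0 b0).
Local Notation tG := (tR quu quw qww a0 b0 a1 b1).
Local Notation AG := (AR ku kw mu mw a0 b0).
Local Notation BG := (BR quu quw qww ku kw mu mw a0 b0 a1 b1).
Local Notation CG := (CR quu quw qww ku kw mu mw a0 b0 a1 b1).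
Local Notation EG := (ER quu quw qww ku kw mu mw a0 b0 a1 b1).
Local Notation pt x y := ((x)*a0 + (y)*ah) (only parsing).

Lemma Gpt y : G y -> negative H y -> exists c (xx yy : R),
  [/\ c != 0, y = c *: wv (xx*a0+yy*ah) (xx*b0+yy*bh),
      0 < sG*xx^+2 - tG*yy^+2 &
      ta_cg H y p = (Fr (xx*a0+yy*ah) (xx*b0+yy*bh))%:C].
Proof.
move=> Gy ny; have [c [a [b [cn yE yq]]]] := Gneg _ Gy ny.
have e1 := @coord1 quu quw qww a0 b0 a1 b1 q00n rpos_lem a b.
have e2 := @coord2 quu quw qww a0 b0 a1 b1 q00n rpos_lem a b.
have e := QfE quu quw qww a0 b0 a1 b1 (xcR quu quw qww a0 b0 a1 b1 a b) (ycR quu quw qww a0 b0 a1 b1 a b).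
rewrite -e1 -e2 in e.
exists c, (xcR quu quw qww a0 b0 a1 b1 a b), (ycR quu quw qww a0 b0 a1 b1 a b).
rewrite -e1 -e2; split => //.
- by move: yq; rewrite e oppr_lt0.
- by rewrite yE ta_wv // (lt_eqF yq).
Qed.

Lemma Gpt_in (xx yy : R) : 0 < sG*xx^+2 - tG*yy^+2 ->
  [/\ G (1 *: wv (xx*a0+yy*ah) (xx*b0+yy*bh)),
      negative H (1 *: wv (xx*a0+yy*ah) (xx*b0+yy*bh)) &
      ta_cg H (1 *: wv (xx*a0+yy*ah) (xx*b0+yy*bh)) p = (Fr (xx*a0+yy*ah) (xx*b0+yy*bh))%:C].
Proof.
move=> D.
have q : Qf (xx*a0+yy*ah) (xx*b0+yy*bh) < 0 by rewrite QfE oppr_lt0.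
have [G1 n1] := Gin 1 _ _ (oner_neq0 _) q.
by split => //; rewrite ta_wv ?oner_neq0 // (lt_eqF q).
Qed.

Lemma ratioE : hf H g p * hf H p g' / hf H g g' =
   ((L1 a0 b0 * L1 a1 b1 + L2 a0 b0 * L2 a1 b1) / Qb a0 b0 a1 b1) +i*
   ((L2 a0 b0 * L1 a1 b1 - L1 a0 b0 * L2 a1 b1) / Qb a0 b0 a1 b1).
Proof.
rewrite (@hf_herm H g' p hH) gE g'E hfZl hfZl !hfp_wv hf_sc hf_wv.
have [q0|q0n] := eqVneq (Qb a0 b0 a1 b1) 0.
  by rewrite q0 rmorph0 !mulr0 !invr0 !mulr0.
have -> : c0 * (L1 a0 b0 +i* L2 a0 b0) * conjc (c1 * (L1 a1 b1 +i* L2 a1 b1)) /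
    (c0 * conjc c1 * (Qb a0 b0 a1 b1)%:C) =
    (L1 a0 b0 +i* L2 a0 b0) * conjc (L1 a1 b1 +i* L2 a1 b1) * ((Qb a0 b0 a1 b1)^-1)%:C.
  rewrite fmorphV rmorphM /=. field. rewrite conjc_eq0 c1n c0n /=.
  by rewrite andbT eq_complex /= eqxx andbT.
rewrite -[((Qb a0 b0 a1 b1)^-1)%:C]complexr0 [conjc (_ +i* _)]/=. simpc. f_equal; ring.
Qed.

Lemma q00nz : Qf a0 b0 != 0.
Proof. by rewrite (lt_eqF q00n). Qed.

Lemma part1 : (exists x, [/\ G x, in_cgeod H p x & negative H x]) ->
     hf H g p * hf H p g' / hf H g g' \is Num.real.
Proof.
move=> [x [Gx [_ xp] nx]].
have [c [xx [yy [cn xE Dxy _]]]] := Gpt _ Gx nx.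
move: xp; rewrite xE hfZl hfp_wv => /eqP; rewrite mulf_eq0 (negbTE cn) /= eq_complex /=.
case/andP => /eqP l1 /eqP l2.
rewrite L1E in l1; rewrite L2E in l2.
have e1 : xx * EG = 0.
  have -> : xx * EG = L1 ah bh * (xx * L2 a0 b0 + yy * L2 ah bh) - L2 ah bh * (xx * L1 a0 b0 + yy * L1 ah bh) by rewrite /ER; ring.
  by rewrite l1 l2 !mulr0 subrr.
have e2 : yy * EG = 0.
  have -> : yy * EG = L2 a0 b0 * (xx * L1 a0 b0 + yy * L1 ah bh) - L1 a0 b0 * (xx * L2 a0 b0 + yy * L2 ah bh) by rewrite /ER; ring.
  by rewrite l1 l2 !mulr0 subrr.
have E0 : EG = 0.
  move/eqP: e1; rewrite mulf_eq0 => /orP [/eqP x0|/eqP //].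
  move/eqP: e2; rewrite mulf_eq0 => /orP [/eqP y0|/eqP //].
  by move: Dxy; rewrite x0 y0 expr0n /= !mulr0 subrr ltxx.
rewrite ratioE complex_real; apply/eqP.
have : (L2 a0 b0 * L1 a1 b1 - L1 a0 b0 * L2 a1 b1) = 0.
  apply/eqP; have := EEq quu quw qww ku kw mu mw a0 b0 a1 b1.
  by rewrite E0 => /eqP; rewrite mulf_eq0 (negbTE q00nz).
by move=> ->; rewrite mul0r.
Qed.

Lemma ratio2E : Qb a0 b0 a1 b1 != 0 -> AG != 0 ->
  complex.Re (hf H p g' * hf H g g / (hf H g g' * hf H p g)) =
  (L1 a0 b0 * L1 a1 b1 + L2 a0 b0 * L2 a1 b1) * (Qf a0 b0 / (Qb a0 b0 a1 b1 * AG)).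
Proof.
move=> qn An.
rewrite (@hf_herm H g' p hH) (@hf_herm H g p hH) gE g'E hf_scwv !hfZl hfZr !hfp_wv hf_wv.
have l0n : L1 a0 b0 +i* L2 a0 b0 != 0.
  apply: contraNneq An => h; rewrite /AR /NfR.
  by move: h => [-> ->]; rewrite expr0n /= addr0.
have AE : AG%:C = (L1 a0 b0 +i* L2 a0 b0) * conjc (L1 a0 b0 +i* L2 a0 b0) by rewrite mulcc.
transitivity (complex.Re (conjc (L1 a1 b1 +i* L2 a1 b1) * (L1 a0 b0 +i* L2 a0 b0) *
      (Qf a0 b0 / (Qb a0 b0 a1 b1 * AG))%:C)).
  congr complex.Re.
  have l0c : (L1 a0 b0 -i* L2 a0 b0) != 0 by have := l0n; rewrite -conjc_eq0.
  rewrite fmorph_div !rmorphM /= AE -mulcc /=.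
  field.
  by rewrite !fmorph_eq0 qn c0n c1n l0n l0c.
rewrite ReMr [conjc (_ +i* _)]/=. simpc. rewrite /=. ring.
Qed.

Lemma part2 : hf H g p * hf H p g' / hf H g g' \isn't Num.real ->
     (exists x, closest_to_cg H G p x /\
        forall y, closest_to_cg H G p y -> same_point x y) /\
     (ta_geod_cg H G p = complex.Re (ta_cg H g p) <->
        complex.Re (hf H p g' * hf H g g / (hf H g g' * hf H p g)) = 1).
Proof.
move=> nreal; rewrite ratioE complex_real in nreal.
have q01n : Qb a0 b0 a1 b1 != 0 by apply: contraNneq nreal => ->; rewrite invr0 mulr0.
have En : EG != 0.
  apply: contraNneq nreal => E0; have := EEq quu quw qww ku kw mu mw a0 b0 a1 b1.
  rewrite E0 => /eqP; rewrite mulf_eq0 (negbTE q00nz) /= => /eqP ->; by rewrite mul0r.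
have BAC : BG^+2 < AG*CG.
  have := ACB quu quw qww ku kw mu mw a0 b0 a1 b1.
  have : 0 < EG^+2 by rewrite exprn_even_gt0.
  lra.
have A0 : 0 < AG.
  have : 0 <= AG by rewrite /AR /NfR; apply: addr_ge0; exact: sqr_ge0.
  rewrite le_eqVlt => /orP [/eqP A0|//].
  move: BAC; rewrite -A0 mul0r => h. have := sqr_ge0 BG. lra.
have s0 : 0 < sG := @sR_gt0 quu quw qww a0 b0 q00n.
have t0 : 0 < tG := @tR_gt0 quu quw qww a0 b0 a1 b1 q00n rpos_lem.
have ppp := pp_gt0.
have [rr [Ds Hr]] := @core1 sG tG AG BG CG s0 t0 A0 BAC.
split.
  have Dxs : 0 < sG*1^+2 - tG*rr^+2 by rewrite expr1n mulr1.
  have [Gxs nxs taxs] := Gpt_in _ _ Dxs.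
  have minxs : forall y, G y -> negative H y ->
      ta_cg H (1 *: wv (1*a0+rr*ah) (1*b0+rr*bh)) p <= ta_cg H y p.
    move=> y Gy ny; have [c [xx [yy [cn yE Dy tay]]]] := Gpt _ Gy ny.
    rewrite taxs tay lecR !FrE cmpF //.
    have := (Hr xx yy Dy).1. by rewrite !expr1n !mulr1.
  exists (1 *: wv (1*a0+rr*ah) (1*b0+rr*bh)); split; first by split.
  move=> y [Gy ny hy].
  have [c [xx [yy [cn yE Dy tay]]]] := Gpt _ Gy ny.
  have e : ta_cg H (1 *: wv (1*a0+rr*ah) (1*b0+rr*bh)) p = ta_cg H y p.
    by apply/le_anti; rewrite minxs // hy.
  rewrite taxs tay in e; move/complexI: e; rewrite !FrE => e.
  have e' := @eqF _ _ _ _ _ Dxs Dy ppp e.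
  rewrite !expr1n !mulr1 in e'.
  have yyE := (Hr xx yy Dy).2 e'.
  have xxn : xx != 0.
    by apply/eqP => x0; move: Dy; rewrite yyE x0 mulr0 expr0n /= !mulr0 subrr ltxx.
  exists (c * xx%:C).
    by rewrite mulf_neq0 // eq_complex /= negb_and xxn.
  rewrite yE yyE scale1r -scalerA; congr (c *: _).
  rewrite /wv scalerDr !scalerA -!rmorphM /=.
  by congr (_%:C *: _ + _%:C *: _); ring.
have Fg : ta_cg H g p = (Fr (1*a0 + 0*ah) (1*b0 + 0*bh))%:C.
  by rewrite gE (ta_wv c0 a0 b0 c0n q00nz) !mul1r !mul0r !addr0.
have D10 : 0 < sG*1^+2 - tG*0^+2 by rewrite expr1n mulr1 expr0n /= mulr0 subr0.
rewrite Fg /= /ta_geod_cg.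
set S := (X in inf X).
have Sdesc : forall z : R, S z -> exists xx yy : R,
    0 < sG*xx^+2 - tG*yy^+2 /\ z = Fr (xx*a0+yy*ah) (xx*b0+yy*bh).
  move=> z [y [Gy ny] <-]; have [c [xx [yy [_ _ Dy tay]]]] := Gpt _ Gy ny.
  by exists xx, yy; split => //; rewrite tay.
have Smem : forall xx yy : R, 0 < sG*xx^+2 - tG*yy^+2 -> S (Fr (xx*a0+yy*ah) (xx*b0+yy*bh)).
  move=> xx yy Dy; have [G1 n1 t1] := Gpt_in _ _ Dy.
  by exists (1 *: wv (xx*a0+yy*ah) (xx*b0+yy*bh)) => //; rewrite t1.
have Slb : has_lbound S.
  exists 1 => z /Sdesc [xx [yy [Dy ->]]]; apply: Fr_ge1; by rewrite QfE oppr_lt0.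
have n10 : AG*1^+2 + 2*BG*1*0 + CG*0^+2 = AG by rewrite expr1n expr0n /= !mulr0 mulr1 !addr0.
have d10 : sG*1^+2 - tG*0^+2 = sG by rewrite expr1n expr0n /= mulr0 mulr1 subr0.
have key : (forall z : R, S z -> Fr (1*a0 + 0*ah) (1*b0 + 0*bh) <= z) <-> BG = 0.
  rewrite -(@core2 sG tG AG BG CG s0 t0 A0 BAC); split.
  - move=> h xx yy Dy; have := h _ (Smem xx yy Dy).
    by rewrite !FrE cmpF // n10 d10.
  - move=> h z /Sdesc [xx [yy [Dy ->]]].
    by rewrite !FrE cmpF // n10 d10; exact: h.
have R2 : complex.Re (hf H p g' * hf H g g / (hf H g g' * hf H p g)) = 1 <-> BG = 0.
  rewrite ratio2E //; last by rewrite gt_eqF.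
  have := BBq quu quw qww ku kw mu mw a0 b0 a1 b1 => hB.
  have -> : (L1 a0 b0 * L1 a1 b1 + L2 a0 b0 * L2 a1 b1) * (Qf a0 b0 / (Qb a0 b0 a1 b1 * AG))
     = 1 + BG / (Qb a0 b0 a1 b1 * AG).
    rewrite mulrA [_ * Qf a0 b0]mulrC hB; field; by rewrite ?q01n ?(gt_eqF A0).
  split => [h|->]; last by rewrite mul0r addr0.
  have : BG / (Qb a0 b0 a1 b1 * AG) = 0 by lra.
  by move/eqP; rewrite mulf_eq0 invr_eq0 mulf_eq0 (negbTE q01n) (gt_eqF A0) /= orbF => /eqP.
rewrite R2 -key; split.
- by move=> hinf z Sz; rewrite -hinf; exact: (ge_inf Slb Sz).
- move=> hlb; apply/le_anti/andP; split.
  + exact: (ge_inf Slb (Smem 1 0 D10)).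
  + by apply: lb_le_inf => //; exists (Fr (1*a0 + 0*ah) (1*b0 + 0*bh)); exact: Smem.
Qed.

Lemma main_lem :
  ((exists x, [/\ G x, in_cgeod H p x & negative H x]) ->
     hf H g p * hf H p g' / hf H g g' \is Num.real) /\
  (hf H g p * hf H p g' / hf H g g' \isn't Num.real ->
     (exists x, closest_to_cg H G p x /\
        forall y, closest_to_cg H G p y -> same_point x y) /\
     (ta_geod_cg H G p = complex.Re (ta_cg H g p) <->
        complex.Re (hf H p g' * hf H g g / (hf H g g' * hf H p g)) = 1)).
Proof. split; [exact: part1 | exact: part2]. Qed.

End Geo.
End T.

Theorem lemma4p1 (R : realType) (H : 'M[R[i]]_3) (p : 'rV[R[i]]_3)
    (G : 'rV[R[i]]_3 -> Prop) (g g' : 'rV[R[i]]_3) :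
  herm_sig_ppm H ->
  positive H p ->
  is_geodesic H G ->
  (exists x, G x /\ ~ in_cgeod H p x) ->
  G g -> G g' -> negative H g -> negative H g' -> ~ same_point g g' ->
  ((exists x, [/\ G x, in_cgeod H p x & negative H x]) ->
     hf H g p * hf H p g' / hf H g g' \is Num.real) /\
  (hf H g p * hf H p g' / hf H g g' \isn't Num.real ->
     (exists x, closest_to_cg H G p x /\
        forall y, closest_to_cg H G p y -> same_point x y) /\
     (ta_geod_cg H G p = complex.Re (ta_cg H g p) <->
        complex.Re (hf H p g' * hf H g g / (hf H g g' * hf H p g)) = 1)).
Proof.
move=> [hH [P Pu hP]] ppos [u [w [_ huw _ Gc]]] _ Gg Gg' ng ng' nsame.
have [c0 [a0 [b0 [c0n gE q00n]]]] := @Gneg R H u w hH huw G Gc g Gg ng.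
have [c1 [a1 [b1 [c1n g'E q11n]]]] := @Gneg R H u w hH huw G Gc g' Gg' ng'.
exact: (@main_lem R H P u w p hH huw ppos Pu hP G g g' Gc nsame c0 c1 a0 b0 a1 b1
  c0n c1n gE g'E q00n q11n).
Qed.
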